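(* For any choice of $(\hat\imath,\hat\jmath)\in\mathcal E$ defining $B_1$, the matrix $B_1$ is invertible, and $$\mathfrak d(i,\ell)=\frac{(e^{\mathsf T}B_1^{-1})_\ell}{(e^{\mathsf T}B_1^{-1})_i}\qquad\forall\,i,\ell\in\mathcal I.$$ Moreover $(e^{\mathsf T}B_1^{-1})_i>0$ for all $i\in\mathcal I$.
   Context: Network: $\mathcal I=\{1,\dots,I\}$, $\mathcal J=\{1,\dots,J\}$, edges $\mathcal E\subset\mathcal I\times\mathcal J$ with the bipartite graph $\mathcal G=(\mathcal I\cup\mathcal J,\mathcal E)$ a tree; $i\sim j$ iff $(i,j)\in\mathcal E$; $\mathcal J(i)=\{j:i\sim j\}$, $\mathcal I(j)=\{i:i\sim j\}$; $\mathbb R^{\mathcal G}$ denotes arrays in $\mathbb R^{I\times J}$ vanishing off $\mathcal E$. Service rates $\mu_{ij}>0$ for $i\sim j$. $e$ is the all-ones vector. Let $\mathcal D=\{(\alpha,\beta)\in\mathbb R^I\times\mathbb R^J:\sum_i\alpha_i=\sum_j\beta_j\}$ and $\Psi:\mathcal D\to\mathbb R^{\mathcal G}$ the unique linear map with $\sum_j\Psi_{ij}(\alpha,\beta)=\alpha_i$, $\sum_i\Psi_{ij}(\alpha,\beta)=\beta_j$. For $(\hat\imath,\hat\jmath)\in\mathcal E$, $B_1\in\mathbb R^{I\times I}$ and $B_2\in\mathbb R^{I\times J}$ are the unique matrices with column $\hat\jmath$ of $B_2$ zero and $\sum_{j\in\mathcal J(i)}\mu_{ij}\Psi_{ij}(\alpha,\beta)=(B_1\alpha+B_2\beta)_i$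 for all $i$ and $(\alpha,\beta)\in\mathcal D$. Gains: for $i\ne i'$ in $\mathcal I$ with unique shortest path $(i_1,j_1,i_2,\dots,j_{m-1},i_m)$ in $\mathcal G$ from $i=i_1$ to $i'=i_m$, $\mathfrak d(i,i'):=\prod_{k=1}^{m-1}\mu_{i_kj_k}/\mu_{i_{k+1}j_k}$; and $\mathfrak d(i,i):=1$. *)

(* Defs.v *)
From mathcomp Require Import all_boot all_order all_algebra.
Set Implicit Arguments. Unset Strict Implicit. Unset Printing Implicit Defensive.
Import Order.TTheory GRing.Theory Num.Theory.
Local Open Scope ring_scope.

Section Network.
Variables (I J : nat) (E : 'I_I -> 'I_J -> bool).

Definition vtx := ('I_I + 'I_J)%type.

Definition adj : rel vtx := fun u v =>
  match u, v with
  | inl i, inr j => E i j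
  | inr j, inl i => E i j
  | _, _ => false
  end.

Definition graph_connected : Prop := forall u v : vtx, connect adj u v.
Definition graph_acyclic : Prop :=
  forall c : seq vtx, uniq c -> cycle adj c -> (size c < 3)%N.
Definition is_tree : Prop := graph_connected /\ graph_acyclic.

(* arrays in R^G : vanishing off E *)
Definition in_RG (R : pzRingType) (x : 'M[R]_(I, J)) : Prop :=
  forall i j, ~~ E i j -> x i j = 0.

(* B1, B2 defining property for the choice (ih, jh):
   column jh of B2 is zero, and for every (al, be) in D,
   sum_{j in J(i)} mu_ij Psi_ij(al,be) = (B1 al + B2 be)_i.
   Psi(al,be) is the (unique, G being a tree) x in R^G with row sums al and
   column sums be, so we quantify over all such x. *)
Definition B_matrices (R : pzRingType) (mu : 'M[R]_(I, J)) (jh : 'I_J)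
    (B1 : 'M[R]_I) (B2 : 'M[R]_(I, J)) : Prop :=
  (forall i, B2 i jh = 0) /\
  forall (x : 'M[R]_(I, J)) (al : 'cV[R]_I) (be : 'cV[R]_J),
    in_RG x ->
    (forall i, \sum_(j < J) x i j = al i 0) ->
    (forall j, \sum_(i < I) x i j = be j 0) ->
    forall i, \sum_(j < J | E i j) mu i j * x i j = (B1 *m al + B2 *m be) i 0.

(* gain along a path (i = i_1) :: [inr j_1; inl i_2; ...; inr j_{m-1}; inl i_m]:
   prod_k mu_{i_k j_k} / mu_{i_{k+1} j_k} *)
Fixpoint path_gain (R : fieldType) (mu : 'M[R]_(I, J)) (i : 'I_I) (p : seq vtx)
    : R :=
  match p with
  | inr j :: inl i' :: p' => mu i j / mu i' j * path_gain mu i' p'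
  | _ => 1
  end.

Definition shortest_path (u v : vtx) (p : seq vtx) : Prop :=
  path adj u p /\ last u p = v /\
  forall q : seq vtx, path adj u q -> last u q = v -> (size p <= size q)%N.

(* the gain d(i,i') of the paper: for i <> i' it is the path gain along the
   unique shortest path; for i = i' the shortest path is empty and gain = 1 *)
Definition is_gain (R : fieldType) (mu : 'M[R]_(I, J)) (i i' : 'I_I) (g : R)
    : Prop :=
  forall p, shortest_path (inl i) (inl i') p -> path_gain mu i p = g.

End Network.

(* Main.v *)
Require Import Defs.
From mathcomp Require Import all_boot all_order all_algebra.
From mathcomp Require Import ring.
Import Order.TTheory GRing.Theory Num.Theory.
Local Open Scope ring_scope.

Lemma propagate I J (E : 'I_I -> 'I_J -> bool) (P : vtx I J -> Prop) s :
  (forall u v, P u -> adj E u v -> P v) -> P s ->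
  forall t, connect (adj E) s t -> P t.
Proof.
move=> step Ps t /connectP [p pth ->].
elim: p s Ps pth => [|a p IH] s Ps //=.
case/andP => sa pa; exact: IH (step _ _ Ps sa) pa.
Qed.

Lemma edge_eq (R : pzRingType) I J (E : 'I_I -> 'I_J -> bool) (mu : 'M[R]_(I,J)) jh B1 B2 :
  B_matrices E mu jh B1 B2 -> forall i0 j0, E i0 j0 ->
  forall (w : 'rV[R]_I), w 0 i0 * mu i0 j0 = (w *m B1) 0 i0 + (w *m B2) 0 j0.
Proof.
move=> [_ HB] i0 j0 Eij w.
have H := HB (delta_mx i0 j0) (delta_mx i0 0) (delta_mx j0 0).
have key0 (i : 'I_I) : (i == i0)%:R * mu i0 j0 =
    (B1 *m (delta_mx i0 0 : 'cV[R]_I) + B2 *m (delta_mx j0 0 : 'cV[R]_J)) i 0.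
  have h1 : in_RG E (delta_mx i0 j0 : 'M[R]_(I,J)).
    move=> i1 j nE; rewrite mxE.
    case: (boolP ((i1 == i0) && (j == j0))) => [/andP [/eqP e1 /eqP e2]|] //.
    by move: nE; rewrite e1 e2 Eij.
  have h2 : forall i1, \sum_(j < J) (delta_mx i0 j0 : 'M[R]_(I,J)) i1 j = (delta_mx i0 0 : 'cV[R]_I) i1 0.
    move=> i1; rewrite (bigD1 j0) //= big1 ?addr0.
      by rewrite !mxE !eqxx ?andbT.
    by move=> j nj; rewrite mxE (negbTE nj) andbF.
  have h3 : forall j, \sum_(i1 < I) (delta_mx i0 j0 : 'M[R]_(I,J)) i1 j = (delta_mx j0 0 : 'cV[R]_J) j 0.
    move=> j; rewrite (bigD1 i0) //= big1 ?addr0.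
      by rewrite !mxE !eqxx ?andbT.
    by move=> i1 ni; rewrite mxE (negbTE ni).
  rewrite -(H h1 h2 h3 i).
  rewrite big_mkcond (bigD1 j0) //= big1 ?addr0; last first.
    by move=> j nj; rewrite mxE (negbTE nj) andbF mulr0; case: (E i j).
  case: (eqVneq i i0) => [->|ne].
    by rewrite Eij mxE !eqxx mulr1 mul1r.
  by rewrite mxE (negbTE ne) /= mulr0 mul0r; case: (E i j0).
have key (i : 'I_I) : (i == i0)%:R * mu i0 j0 = B1 i i0 + B2 i j0.
  rewrite key0 !mxE (bigD1 i0) //= (bigD1 j0) //= !big1 ?addr0.
  - by rewrite !mxE !eqxx !mulr1.
  - by move=> j nj; rewrite mxE (negbTE nj) mulr0.
  - by move=> k nk; rewrite mxE (negbTE nk) mulr0.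
rewrite !mxE -big_split /=.
rewrite (bigD1 i0) //= big1 ?addr0.
  by rewrite -mulrDr -(key i0) eqxx mul1r.
by move=> i ni; rewrite -mulrDr -key (negbTE ni) mul0r mulr0.
Qed.

Lemma gain_path (R : fieldType) I J (E : 'I_I -> 'I_J -> bool) (mu : 'M[R]_(I,J))
  (v : 'I_I -> R) (c : 'I_J -> R) :
  (forall i j, E i j -> v i * mu i j = c j) -> (forall i, v i != 0) ->
  (forall i j, E i j -> mu i j != 0) ->
  forall n p i l, (size p <= n)%N -> path (adj E) (inl i) p -> last (inl i) p = inl l ->
  path_gain mu i p = v l / v i.
Proof.
move=> hc hv hm; elim=> [|n IH] [|a p] i l //=.
- by move=> _ _ [->]; rewrite divff.
- by move=> _ _ [->]; rewrite divff.
case: a => [k|j] //; case: p => [|[k|j'] q] //=.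
move=> sz /and3P [Eij Ekj pq] lq.
rewrite (IH q k l) //; last by apply: ltnW; rewrite -ltnS.
have hi := hc _ _ Eij; have hk := hc _ _ Ekj.
have hmk := hm _ _ Ekj.
have -> : mu i j = v k * mu k j / v i.
  by apply: (mulfI (hv i)); rewrite hi hk mulrC divfK.
  by field; rewrite !hv hmk.
by rewrite andbF.
Qed.

Theorem theorem3 (R : realFieldType) (I J : nat) (E : 'I_I -> 'I_J -> bool)
  (mu : 'M[R]_(I, J)) (ih : 'I_I) (jh : 'I_J)
  (B1 : 'M[R]_I) (B2 : 'M[R]_(I, J)) :
  is_tree E ->
  (forall i j, E i j -> 0 < mu i j) ->
  E ih jh ->
  B_matrices E mu jh B1 B2 ->
  B1 \in unitmx /\
  (forall i l : 'I_I,
     is_gain E mu i l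
       (((const_mx 1 : 'rV[R]_I) *m invmx B1) 0 l / ((const_mx 1 : 'rV[R]_I) *m invmx B1) 0 i)) /\
  (forall i : 'I_I, 0 < ((const_mx 1 : 'rV[R]_I) *m invmx B1) 0 i).
Proof.
move=> [conn _] mupos _ HB.
have Hedge := @edge_eq _ _ _ _ _ _ _ _ HB.
have B2jh : forall w : 'rV[R]_I, (w *m B2) 0 jh = 0.
  by move=> w; rewrite mxE big1 // => i _; rewrite HB.1 mulr0.
have muneq i j : E i j -> mu i j != 0 by move=> /mupos /lt0r_neq0.
have uniq0 : forall u : 'rV[R]_I, u *m B1 = 0 -> u = 0.
  move=> u uB.
  pose P := fun x : vtx I J => match x with inl i => u 0 i = 0 | inr j => (u *m B2) 0 j = 0 end.
  have HP : forall t, P t.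
    move=> t; apply: (@propagate _ _ E P (inr jh) _ _ t (conn _ _)); last by rewrite /P /= B2jh.
    case=> [i|j] [i'|j'] //= Pu e.
      by have := Hedge _ _ e u; rewrite Pu mul0r uB mxE add0r => <-.
    have := Hedge _ _ e u; rewrite Pu uB mxE addr0 => /eqP.
    by rewrite mulf_eq0 (negbTE (muneq _ _ e)) orbF => /eqP.
  by apply/rowP => i; rewrite mxE; exact: (HP (inl i)).
have unitB1 : B1 \in unitmx.
  rewrite -row_free_unit -kermx_eq0; apply/eqP/row_matrixP => i.
  by rewrite row0; apply: uniq0; rewrite -row_mul mulmx_ker row0.
set v := (const_mx 1 : 'rV[R]_I) *m invmx B1.
have vB1 : v *m B1 = const_mx 1 by rewrite /v mulmxKV.
pose c := fun j => 1 + (v *m B2) 0 j.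
have hc : forall i j, E i j -> v 0 i * mu i j = c j.
  by move=> i j e; rewrite Hedge // vB1 mxE.
have pos : forall i, 0 < v 0 i.
  pose P := fun x : vtx I J => match x with inl i => 0 < v 0 i | inr j => 0 < c j end.
  have HP : forall t, P t.
    move=> t; apply: (@propagate _ _ E P (inr jh) _ _ t (conn _ _)); last by rewrite /P /c /= B2jh addr0 ltr01.
    case=> [i|j] [i'|j'] //= Pu e.
      by rewrite -(hc _ _ e) mulr_gt0 // mupos.
    by move: Pu; rewrite -(hc _ _ e) pmulr_lgt0 // mupos.
  by move=> i; exact: (HP (inl i)).
split=> //; split=> // i l p [pth [lst _]].
apply: (@gain_path R I J E mu (fun i => v 0 i) c hc _ muneq (size p)) => //.
by move=> k; rewrite lt0r_neq0.
Qed.
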